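(* Let $\mu$ be a (complex or signed) Borel measure on $\mathbb{R}^{k+l}=\mathbb{R}^k\times\mathbb{R}^l$ and let $\alpha>0$. Suppose that $\mu(I\times A)=0$ for every parallelepiped $I\subset\mathbb{R}^k$ and every Borel set $A\subset\mathbb{R}^l$ with $\dim A<\alpha$. Then $\dim\mu\ge\alpha$.
   Context: $\dim A$ denotes Hausdorff dimension. For a measure $\mu$, $\dim\mu=\inf\{\gamma : \text{there is a Borel set } F \text{ with } \mu(F)\ne0 \text{ and } \dim F\le\gamma\}$. *)

(* Defs.v *)
From HB Require Import structures.
From mathcomp Require Import all_boot all_order all_algebra.
From mathcomp Require Import all_classical all_reals all_analysis.
Set Implicit Arguments. Unset Strict Implicit. Unset Printing Implicit Defensive.
Import Order.TTheory GRing.Theory Num.Theory.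
Import numFieldNormedType.Exports.
Local Open Scope classical_set_scope.
Local Open Scope ring_scope.

Section Defs.
Variable R : realType.

Definition enorm (n : nat) (v : 'rV[R]_n) : R :=
  Num.sqrt (\sum_(i < n) (v ord0 i) ^+ 2).

(* diameter (w.r.t. the Euclidean metric) of a set; only used on bounded sets *)
Definition ediam (n : nat) (U : set 'rV[R]_n) : R :=
  sup [set r | exists x y, U x /\ U y /\ r = enorm (x - y)].

Definition delta_cover (n : nat) (delta : R) (A : set 'rV[R]_n)
    (U : nat -> set 'rV[R]_n) : Prop :=
  (forall i x y, U i x -> U i y -> enorm (x - y) <= delta) /\
  A `<=` \bigcup_i U i.

Definition hausdorff_content (n : nat) (s delta : R) (A : set 'rV[R]_n)
  : \bar R :=
  ereal_inf [set (\sum_(0 <= i <oo) ((ediam (U i)) `^ s)%:E)%E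
            | U in delta_cover delta A].

Definition hausdorff_measure (n : nat) (s : R) (A : set 'rV[R]_n) : \bar R :=
  ereal_sup [set hausdorff_content s delta A | delta in [set d : R | 0 < d]].

Definition hdim (n : nat) (A : set 'rV[R]_n) : \bar R :=
  ereal_inf [set s%:E | s in [set s : R | 0 < s /\ hausdorff_measure s A = 0%E]].

Definition borel_set (n : nat) : set (set 'rV[R]_n) := <<s (@open 'rV[R]_n) >>.
Definition BorelRn (n : nat) := g_sigma_algebraType (@open 'rV[R]_n).

Definition prodset (k l : nat) (I : set 'rV[R]_k) (A : set 'rV[R]_l)
  : set 'rV[R]_(k + l) :=
  [set z | I (lsubmx z) /\ A (rsubmx z)].

Definition box (k : nat) (a b : 'rV[R]_k) : set 'rV[R]_k :=
  [set x | forall i, a ord0 i <= x ord0 i <= b ord0 i].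

(* dimension of the complex measure mu = nu1 + i nu2:
   inf { gamma : exists Borel F, mu(F) <> 0 and dim F <= gamma } *)
Definition cmeasure_dim (n : nat)
    (nu1 nu2 : {charge set (BorelRn n) -> \bar R}) : \bar R :=
  ereal_inf [set g%:E | g in [set g : R | exists F : set 'rV[R]_n,
       borel_set F /\ (nu1 F <> 0%E \/ nu2 F <> 0%E) /\ (hdim F <= g%:E)%E]].

End Defs.

(* Main.v *)
Require Import Defs.
Set Implicit Arguments. Unset Strict Implicit. Unset Printing Implicit Defensive.
From HB Require Import structures.
From mathcomp Require Import all_boot all_order all_algebra.
From mathcomp Require Import all_classical all_reals all_analysis.
Import Order.TTheory GRing.Theory Num.Theory.
Import numFieldNormedType.Exports.
Local Open Scope classical_set_scope.
Local Open Scope ring_scope.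
From mathcomp Require Import ring lra.
Section PartA.
Variable R : realType.
Variable n : nat.
Implicit Types (X Y : set 'rV[R]_n) (s d e : R).

Lemma content_ge0 s d X : (0 <= hausdorff_content s d X)%E.
Proof.
apply: le_ereal_inf_tmp => _ [U _ <-]; apply: nneseries_ge0 => i _ _.
by rewrite lee_fin powR_ge0.
Qed.

Lemma content_le_hm s d X : 0 < d ->
  (hausdorff_content s d X <= hausdorff_measure s X)%E.
Proof. by move=> d0; apply: ereal_sup_ubound; exists d. Qed.

Lemma hm_ge0 s X : (0 <= hausdorff_measure s X)%E.
Proof. apply: (le_trans (content_ge0 s 1 X)); exact: content_le_hm. Qed.

Lemma small_cover s X : hausdorff_measure s X = 0%E ->
  forall d e, 0 < d -> 0 < e -> exists U, delta_cover d X U /\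
   (\sum_(0 <= i <oo) ((ediam (U i)) `^ s)%:E < e%:E)%E.
Proof.
move=> H0 d e d0 e0.
have : (hausdorff_content s d X < e%:E)%E.
  by rewrite (le_lt_trans (@content_le_hm s d X d0)) // H0 lte_fin.
by move=> /ereal_inf_lt[_ [U UC <-] lt]; exists U.
Qed.

Lemma hm0 s X : (forall d e, 0 < d -> 0 < e -> exists U, delta_cover d X U /\
   (\sum_(0 <= i <oo) ((ediam (U i)) `^ s)%:E <= e%:E)%E) ->
  hausdorff_measure s X = 0%E.
Proof.
move=> H; apply/eqP; rewrite eq_le hm_ge0 andbT.
apply: ge_ereal_sup => _ [d d0 <-].
apply/lee_addgt0Pr => e e0; rewrite add0e.
have [U [UC Ule]] := H d e d0 e0.
by apply: le_trans Ule; apply: ereal_inf_lbound; exists U.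
Qed.

Lemma hm0_sub s X Y : Y `<=` X -> hausdorff_measure s X = 0%E ->
  hausdorff_measure s Y = 0%E.
Proof.
move=> YX H0; apply: hm0 => d e d0 e0.
have [U [[U1 U2] Ule]] := small_cover H0 d0 e0.
exists U; split; last exact: ltW.
by split=> //; apply: subset_trans U2.
Qed.

Lemma hdim_le s X : 0 < s -> hausdorff_measure s X = 0%E ->
  (hdim X <= s%:E)%E.
Proof. by move=> s0 H; apply: ereal_inf_lbound; exists s. Qed.

Lemma hdim_lt X a : (hdim X < a%:E)%E ->
  exists s, [/\ 0 < s, s < a & hausdorff_measure s X = 0%E].
Proof.
by move=> /ereal_inf_lt[_ [s [s0 H] <-]]; rewrite lte_fin => sa; exists s.
Qed.

End PartA.
Section PartN.
Variable R : realType.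

Lemma enorm_ge0 n (v : 'rV[R]_n) : 0 <= enorm v.
Proof. exact: sqrtr_ge0. Qed.

Lemma coord_le_enorm n (v : 'rV[R]_n) j : `|v ord0 j| <= enorm v.
Proof.
rewrite /enorm -sqrtr_sqr ler_sqrt; last by apply: sumr_ge0 => i _; exact: sqr_ge0.
by rewrite (bigD1 j) //= lerDl; apply: sumr_ge0 => i _; exact: sqr_ge0.
Qed.

Lemma enorm_le n (v : 'rV[R]_n) c : 0 <= c -> (forall j, `|v ord0 j| <= c) ->
  enorm v <= c * Num.sqrt n%:R.
Proof.
move=> c0 H; rewrite /enorm -(ger0_norm c0) -sqrtr_sqr -sqrtrM ?sqr_ge0 //.
rewrite ler_sqrt; last by rewrite mulr_ge0 ?sqr_ge0.
apply: le_trans (_ : \sum_(i < n) `|c| ^+ 2 <= _).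
  apply: ler_sum => i _; rewrite -normrX ger0_norm ?sqr_ge0 //.
  by rewrite -[_ ^+ 2]ger0_norm ?sqr_ge0 // normrX lerXn2r ?nnegrE // ger0_norm.
by rewrite sumr_const card_ord ger0_norm // mulr_natr.
Qed.

Lemma enorm_rsub k l (w : 'rV[R]_(k + l)) : enorm (rsubmx w) <= enorm w.
Proof.
rewrite /enorm ler_sqrt; last by apply: sumr_ge0 => i _; exact: sqr_ge0.
rewrite big_split_ord /=.
rewrite [X in X <= _](eq_bigr (fun i => w ord0 (rshift k i) ^+ 2)); last first.
  by move=> i _; rewrite mxE.
by rewrite lerDr; apply: sumr_ge0 => i _; exact: sqr_ge0.
Qed.

Lemma rsubB k l (x y : 'rV[R]_(k + l)) : rsubmx (x - y) = rsubmx x - rsubmx y.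
Proof. by apply/matrixP => i j; rewrite !mxE. Qed.

Lemma lsubB k l (x y : 'rV[R]_(k + l)) : lsubmx (x - y) = lsubmx x - lsubmx y.
Proof. by apply/matrixP => i j; rewrite !mxE. Qed.

End PartN.
Section PartC.
Variable R : realType.

Lemma ball_rowP n (x y : 'rV[R]_n) e :
  ball x e y <-> (0 < e /\ forall j, `|x ord0 j - y ord0 j| < e).
Proof.
split=> [[e0 H]|[e0 H]]; split => //.
  by move=> j; exact: H.
by move=> i j; rewrite (ord1 i); exact: H.
Qed.

Lemma open_preim n m (f : 'rV[R]_n -> 'rV[R]_m) :
  (forall x y e, ball x e y -> ball (f x) e (f y)) ->
  forall O, open O -> open (f @^-1` O).
Proof.
move=> Hf O oO; rewrite openE => x /= Ox.
have : nbhs (f x) O by apply: open_nbhs_nbhs; split.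
move=> /nbhs_ballP[e e0 sub]; apply/nbhs_ballP; exists e => // y /Hf.
exact: sub.
Qed.

Lemma borel_open n (A : set 'rV[R]_n) : open A -> @measurable _ (BorelRn R n) A.
Proof. by move=> oA; apply: sub_sigma_algebra. Qed.

Lemma box_closed_open n (a b : 'rV[R]_n) : open (~` box a b).
Proof.
rewrite openE => x /= nbx; apply/nbhs_ballP.
have [j] : exists j, ~~ (a ord0 j <= x ord0 j <= b ord0 j).
  apply/not_existsP => H; apply: nbx => j; have := H j; by move/negP/negPn.
rewrite negb_and -!ltNge => /orP[xa|bx].
- exists (a ord0 j - x ord0 j); first by rewrite /= subr_gt0.
  move=> y /ball_rowP[_ H] /(_ j) /andP[ay _]; have := H j.
  rewrite ltr_norml => /andP[h1 h2]; lra.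
- exists (x ord0 j - b ord0 j); first by rewrite /= subr_gt0.
  move=> y /ball_rowP[_ H] /(_ j) /andP[_ yb]; have := H j.
  rewrite ltr_norml => /andP[h1 h2]; lra.
Qed.

Lemma borel_box n (a b : 'rV[R]_n) : @measurable _ (BorelRn R n) (box a b).
Proof.
rewrite -[box a b]setCK; apply: measurableC; apply: borel_open.
exact: box_closed_open.
Qed.

Lemma borel_preim n m (f : 'rV[R]_n -> 'rV[R]_m) :
  (forall x y e, ball x e y -> ball (f x) e (f y)) ->
  forall B, @measurable _ (BorelRn R m) B ->
   @measurable _ (BorelRn R n) (f @^-1` B).
Proof.
move=> Hf B mB.
have : @measurable_fun _ _ (BorelRn R n) (BorelRn R m) setT f.
  apply: (@measurability _ _ (BorelRn R n) (BorelRn R m) setT f open) => //.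
  move=> _ [U oU <-]; rewrite setTI; apply: borel_open.
  exact: open_preim.
by move=> /(_ measurableT B mB); rewrite setTI.
Qed.

Lemma ball_lsub k l (x y : 'rV[R]_(k + l)) e :
  ball x e y -> ball (lsubmx x) e (lsubmx y).
Proof. by move=> /ball_rowP[e0 H]; apply/ball_rowP; split => // j; rewrite !mxE. Qed.

Lemma ball_rsub k l (x y : 'rV[R]_(k + l)) e :
  ball x e y -> ball (rsubmx x) e (rsubmx y).
Proof. by move=> /ball_rowP[e0 H]; apply/ball_rowP; split => // j; rewrite !mxE. Qed.

Lemma borel_prodset k l (I : set 'rV[R]_k) (A : set 'rV[R]_l) :
  @measurable _ (BorelRn R k) I -> @measurable _ (BorelRn R l) A ->
  @measurable _ (BorelRn R (k + l)) (prodset I A).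
Proof.
move=> mI mA.
have -> : prodset I A = (@lsubmx R 1 k l) @^-1` I `&` (@rsubmx R 1 k l) @^-1` A by [].
apply: measurableI; apply: borel_preim => //.
- exact: ball_lsub.
- exact: ball_rsub.
Qed.

End PartC.
Section PartB1.
Variable R : realType.

Lemma ediam_ub n (U : set 'rV[R]_n) d x y :
  (forall x y, U x -> U y -> enorm (x - y) <= d) ->
  U x -> U y -> enorm (x - y) <= ediam U.
Proof.
move=> H Ux Uy; apply: ub_le_sup; last by exists x, y.
by exists d => _ [a [b [Ua [Ub ->]]]]; exact: H.
Qed.

Lemma ediam_le n (U : set 'rV[R]_n) c : 0 <= c ->
  (forall x y, U x -> U y -> enorm (x - y) <= c) -> ediam U <= c.
Proof.
move=> c0 H; rewrite /ediam.
case: (pselect (exists x, U x)) => [[x Ux]|nx].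
  apply: ge_sup; first by exists (enorm (x - x)), x, x.
  by move=> _ [a [b [Ua [Ub ->]]]]; exact: H.
rewrite (_ : [set r | _] = set0) ?sup0 //.
by apply/seteqP; split => // r [a [b [Ua _]]]; apply: nx; exists a.
Qed.

Lemma ediam_ge0 n (U : set 'rV[R]_n) d :
  (forall x y, U x -> U y -> enorm (x - y) <= d) -> 0 <= ediam U.
Proof.
move=> H; case: (pselect (exists x, U x)) => [[x Ux]|nx].
  exact: le_trans (enorm_ge0 (x - x)) (ediam_ub H Ux Ux).
rewrite /ediam (_ : [set r | _] = set0) ?sup0 //.
by apply/seteqP; split => // r [a [b [Ua _]]]; apply: nx; exists a.
Qed.

Lemma exists_inv_le (t : R) : 0 < t -> exists m : nat, (m.+1%:R)^-1 <= t.
Proof.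
move=> t0; exists (Num.trunc t^-1).
rewrite -[X in _ <= X](invrK t) lef_pV2 ?posrE ?invr_gt0 //.
exact: ltW (truncnS_gt _).
Qed.

End PartB1.
Section PartB2.
Variable R : realType.
Variables k l : nat.

Definition cbox (c : 'rV[R]_l) (d : R) := box (c - const_mx d) (c + const_mx d).

Lemma cbox_diam c d y y' : 0 <= d -> cbox c d y -> cbox c d y' ->
  enorm (y - y') <= (2 * d) * Num.sqrt l%:R.
Proof.
move=> d0 Hy Hy'; apply: enorm_le; first by rewrite mulr_ge0.
move=> j; have := Hy j; have := Hy' j; rewrite !mxE.
move=> /andP[a1 a2] /andP[b1 b2]; rewrite ler_norml; apply/andP; split; lra.
Qed.

Lemma borel_hull (F : set 'rV[R]_(k + l)) s : 0 < s ->
  hausdorff_measure s F = 0%E ->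
  exists A : set 'rV[R]_l, [/\ @measurable _ (BorelRn R l) A,
     hausdorff_measure s A = 0%E & forall z, F z -> A (rsubmx z)].
Proof.
move=> s0 HF.
pose dl (m : nat) : R := (m.+1%:R)^-1.
have dl0 m : 0 < dl m by rewrite invr_gt0.
have /choice[U HU] : forall m : nat, exists V, delta_cover (dl m) F V /\
   (\sum_(0 <= i <oo) ((ediam (V i)) `^ s)%:E < (dl m)%:E)%E.
  by move=> m; have := small_cover HF (dl0 m) (dl0 m).
have /choice[c Hc] : forall mi : nat * nat, exists c : 'rV[R]_l,
    (exists u, U mi.1 mi.2 u) -> exists2 u, U mi.1 mi.2 u & c = rsubmx u.
  move=> [m i]; case: (pselect (exists u, U m i u)) => [[u Uu]|nu].
    by exists (rsubmx u) => _; exists u.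
  by exists 0 => /nu.
pose d m i := ediam (U m i).
have Ub m i x y : U m i x -> U m i y -> enorm (x - y) <= dl m.
  by have [[H _] _] := HU m; exact: H.
have d0 m i : 0 <= d m i by exact: ediam_ge0 (Ub m i).
have ddl m i : d m i <= dl m by apply: ediam_le; [exact: ltW|exact: Ub].
pose B m i := [set y | (exists u, U m i u) /\ cbox (c (m, i)) (d m i) y].
have mB m i : @measurable _ (BorelRn R l) (B m i).
  case: (pselect (exists u, U m i u)) => [ex|nex].
    rewrite (_ : B m i = cbox (c (m, i)) (d m i)); first exact: borel_box.
    by apply/seteqP; split => [y []//|y ?]; split.
  rewrite (_ : B m i = set0) //.
  by apply/seteqP; split => // y [].
pose A := \bigcap_m \bigcup_i B m i.
exists A; split.
- by apply: bigcapT_measurable => m; apply: bigcupT_measurable => i.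
- apply: hm0 => de ep de0 ep0.
  pose K : R := 2 * Num.sqrt l%:R.
  have K0 : 0 <= K by rewrite mulr_ge0 ?sqrtr_ge0.
  pose Ks := K `^ s.
  have Ks0 : 0 <= Ks := powR_ge0 _ _.
  pose q := K + Ks + 1.
  have q0 : 0 < q by rewrite /q; lra.
  pose t := Num.min (de / q) (ep / q).
  have t0 : 0 < t by rewrite lt_min !divr_gt0.
  have [tde tep] : t <= de / q /\ t <= ep / q.
    by have := le_refl t; rewrite {2}/t le_min => /andP[].
  have [m hm] := exists_inv_le t0.
  have dlm0 := dl0 m.
  have key1 : K * dl m <= de.
    have h : dl m <= de / q by exact: le_trans hm tde.
    move: h; rewrite ler_pdivlMr // => h; rewrite /q in h; nra.
  have key2 : Ks * dl m <= ep.
    have h : dl m <= ep / q by exact: le_trans hm tep.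
    move: h; rewrite ler_pdivlMr // => h; rewrite /q in h; nra.
  have eB i : ediam (B m i) <= K * d m i.
    apply: ediam_le; first by rewrite mulr_ge0.
    move=> y y' [_ Hy] [_ Hy']; rewrite /K mulrAC.
    exact: cbox_diam (d0 m i) Hy Hy'.
  exists (B m); split; [split|].
  + move=> i y y' [_ Hy] [_ Hy'].
    apply: le_trans (cbox_diam (d0 m i) Hy Hy') _.
    have -> : 2 * d m i * Num.sqrt l%:R = K * d m i by rewrite /K; ring.
    apply: le_trans key1; exact: ler_wpM2l.
  + by move=> y Ay; exact: Ay m I.
  + apply: le_trans (_ : _ <= \sum_(0 <= i <oo) (Ks%:E * ((d m i) `^ s)%:E))%E _.
      apply: lee_nneseries => [i _ _|i _]; first by rewrite lee_fin powR_ge0.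
      rewrite -EFinM lee_fin -powRM //.
      apply: ge0_ler_powR; rewrite ?nnegrE ?(ltW s0) ?mulr_ge0 //.
      by apply: ediam_ge0; move=> x x' [_ Hx] [_ Hx']; exact: cbox_diam (d0 m i) Hx Hx'.
    rewrite nneseriesZl; last by move=> i _; rewrite lee_fin powR_ge0.
    apply: le_trans (lee_wpmul2l _ (ltW (proj2 (HU m)))) _; first by rewrite lee_fin.
    by rewrite -EFinM lee_fin.
- move=> z Fz m _; have [[_ cov] _] := HU m.
  have [i _ Uz] := cov z Fz; exists i => //; split; first by exists z.
  have [u Uu ->] := Hc (m, i) (ex_intro _ z Uz).
  move=> j; have := coord_le_enorm (rsubmx z - rsubmx u) j.
  rewrite -rsubB => /le_trans/(_ (enorm_rsub _)) /le_trans.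
  move=> /(_ _ (ediam_ub (Ub m i) Uz Uu)).
  rewrite !mxE ler_norml => /andP[h1 h2]; apply/andP; split.
  + by rewrite /d; lra.
  + by rewrite /d; lra.
Qed.

End PartB2.
Section PartD1.
Variable R : realType.

Lemma charge_bigcup0 d (T : measurableType d) (nu : {charge set T -> \bar R})
  (F : nat -> set T) : (forall i, measurable (F i)) -> trivIset setT F ->
  (forall i, nu (F i) = 0%E) -> nu (\bigcup_i F i) = 0%E.
Proof.
move=> mF tF F0.
have := @charge_semi_sigma_additive _ _ _ nu F mF tF (bigcupT_measurable _ mF).
rewrite (_ : (fun n => _) = (fun=> 0%E)); last first.
  by apply: funext => n; rewrite big1 // => i _; exact: F0.
move=> /cvg_lim <- //; by rewrite lim_cst.
Qed.

End PartD1.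
Section PartD2.
Variable R : realType.

Lemma box_inter n (a b c d : 'rV[R]_n) : box a b `&` box c d =
  box (\row_j Num.max (a ord0 j) (c ord0 j)) (\row_j Num.min (b ord0 j) (d ord0 j)).
Proof.
apply/seteqP; split => [x [H1 H2] j|x H]; rewrite ?mxE.
  have /andP[? ?] := H1 j; have /andP[? ?] := H2 j.
  by rewrite ge_max le_min; do !(apply/andP; split).
split=> j; have := H j; rewrite !mxE ge_max le_min => /andP[/andP[? ?] /andP[? ?]];
  by apply/andP.
Qed.

Lemma prodset_inter k l (I1 I2 : set 'rV[R]_k) (A1 A2 : set 'rV[R]_l) :
  prodset I1 A1 `&` prodset I2 A2 = prodset (I1 `&` I2) (A1 `&` A2).
Proof. by apply/seteqP; split => [z [[? ?] [? ?]]|z [[? ?] [? ?]]]. Qed.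

Lemma box_split k l (a b z : 'rV[R]_(k + l)) :
  box a b z <-> prodset (box (lsubmx a) (lsubmx b)) (box (rsubmx a) (rsubmx b)) z.
Proof.
split => [H|[H1 H2]].
  by split => j; rewrite !mxE; exact: H.
move=> i.
rewrite -(splitK i); case: (fintype.split i) => j /=.
  by have := H1 j; rewrite !mxE.
by have := H2 j; rewrite !mxE.
Qed.

Definition cube n (m : nat) : set 'rV[R]_n :=
  box (const_mx (- m%:R)) (const_mx m%:R).

Lemma cube_mono n m m' : (m <= m')%N -> @cube n m `<=` @cube n m'.
Proof.
move=> mm x H j; have := H j; rewrite !mxE => /andP[h1 h2].
have : (m%:R <= m'%:R :> R) by rewrite ler_nat.
move=> h; apply/andP; split; lra.
Qed.

Lemma cube_cover n (x : 'rV[R]_n) : exists m, @cube n m x.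
Proof.
exists (Num.trunc (\sum_j `|x ord0 j|)).+1 => j; rewrite !mxE.
have h1 : `|x ord0 j| <= \sum_j `|x ord0 j|.
  by rewrite (bigD1 j) //= lerDl; apply: sumr_ge0 => i _.
have h2 := truncnS_gt (\sum_j `|x ord0 j|).
move: h1; rewrite ler_norml => /andP[? ?]; apply/andP; split; lra.
Qed.

End PartD2.
Section PartE.
Variable R : realType.
Variables k l : nat.

Lemma cbox_split (c : 'rV[R]_(k + l)) r (A : set 'rV[R]_l) :
  cbox c r `&` prodset setT A =
  prodset (box (lsubmx (c - const_mx r)) (lsubmx (c + const_mx r)))
          (box (rsubmx (c - const_mx r)) (rsubmx (c + const_mx r)) `&` A).
Proof.
apply/seteqP; split => [z [/box_split [H1 H2] [_ Az]]|z [H1 [H2 Az]]].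
  by split => //; split.
split; last by split.
by apply/box_split; split.
Qed.

Lemma open_gen (A : set 'rV[R]_l) (G : set (set 'rV[R]_(k + l))) :
  @measurable _ (BorelRn R l) A ->
  (forall (a b : 'rV[R]_k) A', @measurable _ (BorelRn R l) A' -> A' `<=` A ->
     G (prodset (box a b) A')) ->
  forall U, open U -> <<s G >> (U `&` prodset setT A).
Proof.
move=> mA HG U oU.
pose S := prodset (@setT 'rV[R]_k) A.
pose V (p : nat) : set 'rV[R]_(k + l) :=
  match @unpickle ('rV[rat]_(k + l) * nat)%type p with
  | Some (q, N) =>
      if pselect (cbox (map_mx ratr q) (N.+1%:R)^-1 `<=` U)
      then cbox (map_mx ratr q) (N.+1%:R)^-1 `&` S else set0
  | None => set0
  end.
have mV p : <<s G >> (V p).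
  rewrite /V; case: (unpickle p) => [[q N]|]; last exact: sigma_algebra0.
  case: pselect => [h|h]; last exact: sigma_algebra0.
  rewrite /S cbox_split; apply: sub_sigma_algebra; apply: HG.
    by apply: measurableI => //; exact: borel_box.
  by move=> y [].
rewrite (_ : U `&` _ = \bigcup_p V p); first exact: sigma_algebra_bigcup.
apply/seteqP; split; last first.
  move=> z [p _]; rewrite /V; case: (unpickle p) => [[q N]|] //.
  by case: pselect => // sub [/sub Uz Sz].
move=> z [Uz Sz].
have : nbhs z U by apply: open_nbhs_nbhs; split.
move=> /nbhs_ballP[e e0 sub].
have [N hN] : exists N : nat, (N.+1%:R)^-1 <= e / 3 by apply: exists_inv_le; rewrite divr_gt0.
set r := (N.+1%:R)^-1 : R in hN *.
have r0 : 0 < r by rewrite invr_gt0.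
have /choice[f Hf] : forall j : 'I_(k + l), exists q : rat,
    z ord0 j - r < ratr q < z ord0 j + r.
  move=> j; have /rat_in_itvoo[q] : z ord0 j - r < z ord0 j + r by lra.
  by rewrite in_itv /=; exists q.
pose q := \row_j f j.
have cE j : (map_mx ratr q : 'rV[R]_(k + l)) ord0 j = ratr (f j) by rewrite !mxE.
have zbox : cbox (map_mx ratr q) r z.
  move=> j; rewrite !mxE; have /andP[h1 h2] := Hf j; apply/andP; split; lra.
exists (pickle (q, N)) => //; rewrite /V pickleK.
case: pselect => [hs|nsub]; first by split.
exfalso; apply: nsub => w wbox; apply: sub; apply/ball_rowP; split => // j.
have := wbox j; have := zbox j; rewrite !mxE => /andP[h1 h2] /andP[h3 h4].
rewrite ltr_norml; apply/andP; split; lra.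
Qed.

End PartE.
Section PartD3.
Variable R : realType.
Variables k l : nat.

Lemma charge_zero (A : set 'rV[R]_l) (nu : {charge set (BorelRn R (k + l)) -> \bar R}) :
  @measurable _ (BorelRn R l) A ->
  (forall (a b : 'rV[R]_k) (A' : set 'rV[R]_l), @measurable _ (BorelRn R l) A' ->
      A' `<=` A -> nu (prodset (box a b) A') = 0%E) ->
  forall F : set 'rV[R]_(k + l), @measurable _ (BorelRn R (k + l)) F ->
    F `<=` prodset setT A -> nu F = 0%E.
Proof.
move=> mA HZ.
pose T (m : nat) : set 'rV[R]_(k + l) := prodset (@cube R k m) A.
have mT m : @measurable _ (BorelRn R (k + l)) (T m).
  by apply: borel_prodset => //; exact: borel_box.
have T0 m : nu (T m) = 0%E by exact: HZ.
pose G := [set X : set 'rV[R]_(k + l) | exists a b A', [/\ @measurable _ (BorelRn R l) A',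
   A' `<=` A & X = prodset (box a b) A']].
pose H := [set X : set 'rV[R]_(k + l) | @measurable _ (BorelRn R (k + l)) X /\
   forall m, nu (X `&` T m) = 0%E].
have GI : setI_closed G.
  move=> _ _ [a [b [A1 [mA1 A1A ->]]]] [c [d [A2 [mA2 A2A ->]]]].
  rewrite prodset_inter box_inter; do 3 eexists; split; last reflexivity.
  - exact: measurableI.
  - by move=> y [/A1A].
have GH : G `<=` H.
  move=> _ [a [b [A1 [mA1 A1A ->]]]]; split.
    by apply: borel_prodset => //; exact: borel_box.
  move=> m; rewrite /T /cube prodset_inter box_inter; apply: HZ.
  - exact: measurableI.
  - by move=> y [].
have dH : dynkin H.
  split.
  - by split; [exact: measurableT|move=> m; rewrite setTI].
  - move=> X [mX HX]; split; first exact: measurableC.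
    move=> m; rewrite setIC -setDE chargeD // setIC HX T0.
    by rewrite oppe0 adde0.
  - move=> F tF HF; split.
      by apply: bigcupT_measurable => i; case: (HF i).
    move=> m; rewrite setI_bigcupl; apply: charge_bigcup0.
    + by move=> i; apply: measurableI => //; case: (HF i).
    + exact: trivIset_setIr.
    + by move=> i; case: (HF i).
have sGH : <<s G >> `<=` H.
  apply: lambda_system_subset => //; first exact/dynkin_lambda_system.
have D4 : forall X, <<s G >> X -> X `<=` prodset setT A -> nu X = 0%E.
  move=> X /sGH [mX HX] XS.
  pose E m := X `&` T m.
  have mE m : @measurable _ (BorelRn R (k + l)) (E m) by exact: measurableI.
  have Emono : {homo E : n m / (n <= m)%N >-> (n <= m)%O}.
    move=> n m nm; apply/subsetPset => z [Xz [Cz Az]]; split => //; split => //.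
    exact: cube_mono nm _ Cz.
  rewrite (_ : X = \bigcup_m E m); last first.
    apply/seteqP; split => [z Xz|z [m _ [Xz _]] //].
    have [m Cm] := cube_cover (lsubmx z); exists m => //; split => //; split => //.
    by case: (XS z Xz).
  rewrite -eq_bigcup_seqD; apply: charge_bigcup0.
  - by case=> [|m] /=; [exact: mE|exact: measurableD].
  - exact: trivIset_seqD.
  - case=> [|m] /=; first exact: HX.
    rewrite chargeD // setIidr; last exact/subsetPset/Emono.
    by rewrite /E !HX oppe0 adde0.
have HGG : forall (a b : 'rV[R]_k) A', @measurable _ (BorelRn R l) A' -> A' `<=` A ->
     G (prodset (box a b) A').
  by move=> a b A' mA' A'A; exists a, b, A'.
have SG : <<s G >> (prodset setT A).
  rewrite (_ : prodset setT A = \bigcup_m T m); last first.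
    apply/seteqP; split => [z [_ Az]|z [m _ [_ Az]] //].
    by have [m Cm] := cube_cover (lsubmx z); exists m.
  by apply: sigma_algebra_bigcup => m; apply: sub_sigma_algebra; exact: HGG.
have Cls : <<s @open 'rV[R]_(k + l) >> `<=` [set X | <<s G >> (X `&` prodset setT A)].
  apply: smallest_sub; last by move=> U oU; exact: open_gen.
  split.
  - rewrite /= [X in <<s G >> X](_ : _ = set0); first exact: sigma_algebra0.
    by apply/seteqP; split => // z [].
  - move=> X HX.
    rewrite /= [Y in <<s G >> Y](_ : _ = prodset setT A `\` (X `&` prodset setT A)).
      exact: (@measurableD _ (g_sigma_algebraType G)).
    apply/seteqP; split => [z [[_ nX] Sz]|z [Sz nXS]]; split => //.
      by move=> [].
    by split => // Xz; apply: nXS.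
  - move=> Fs HF; rewrite /= [Y in <<s G >> Y](_ : _ = \bigcup_i (Fs i `&` prodset setT A)).
      exact: sigma_algebra_bigcup.
    by rewrite setI_bigcupl.
move=> F mF FS; apply: D4 => //.
have h : <<s G >> (F `&` prodset setT A) := Cls F mF.
by rewrite setIidl in h.
Qed.

End PartD3.
Unset Implicit Arguments.

(* complex Borel measure mu = nu1 + i nu2 on R^(k+l); signed case: nu2 = 0 *)
Theorem mainTheorem5 (R : realType) (k l : nat)
    (nu1 nu2 : {charge set (BorelRn R (k + l)) -> \bar R}) (alpha : R) :
  0 < alpha ->
  (forall (a b : 'rV[R]_k) (A : set 'rV[R]_l),
      borel_set A -> (hdim A < alpha%:E)%E ->
      nu1 (prodset (box a b) A) = 0%E /\ nu2 (prodset (box a b) A) = 0%E) ->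
  (alpha%:E <= cmeasure_dim nu1 nu2)%E.
Proof.
move=> a0 Hyp.
have key : forall F : set 'rV[R]_(k + l), borel_set F -> (hdim F < alpha%:E)%E ->
    nu1 F = 0%E /\ nu2 F = 0%E.
  move=> F mF /hdim_lt[s [s0 sa HF]].
  have [A [mA HA FA]] := borel_hull s0 HF.
  have HZ : forall (a b : 'rV[R]_k) (A' : set 'rV[R]_l),
      @measurable _ (BorelRn R l) A' -> A' `<=` A ->
      nu1 (prodset (box a b) A') = 0%E /\ nu2 (prodset (box a b) A') = 0%E.
    move=> a b A' mA' A'A; apply: Hyp => //.
    apply: le_lt_trans (hdim_le s0 (hm0_sub A'A HA)) _.
    by rewrite lte_fin.
  have FS : F `<=` prodset setT A by move=> z Fz; split => //; exact: FA.
  split.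
  - apply: (charge_zero mA _ mF FS) => a b A' mA' A'A; by case: (HZ a b A' mA' A'A).
  - apply: (charge_zero mA _ mF FS) => a b A' mA' A'A; by case: (HZ a b A' mA' A'A).
apply: le_ereal_inf_tmp => _ [g [F [mF [nz dle]]] <-].
rewrite leNgt; apply/negP => ga.
have [h1 h2] := key F mF (le_lt_trans dle ga).
by case: nz.
Qed.
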